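(* Let $G_1,\dots,G_k$ be graphs that are pairwise QASST equivalent and pairwise not locally equivalent, and suppose every graph QASST equivalent to $G_1$ is locally equivalent to one of $G_1,\dots,G_k$. Then $|\mathcal{O}(G_1)|+\cdots+|\mathcal{O}(G_k)|=\Phi(G_1)$.
   Context: Graphs are finite, simple, connected, on a fixed labelled vertex set. The local complement $c_v(G)$ replaces the induced subgraph on the neighbourhood of $v$ by its complement; graphs are locally equivalent if related by a finite sequence of local complements, and $\mathcal{O}(G)$ is the set of graphs locally equivalent to $G$ (labelled graphs). A split is a bipartition $V=A\sqcup B$ with the $A$–$B$ edges forming a complete bipartite graph between the vertices having neighbours across; it is strong if no other split crosses it. Cutting along all nontrivial strong splits (each side plus a new paired marker vertex adjacent to the vertices having neighbours across) yields a tree whose nodes are labelled by quotient graphs. Two graphs are QASST equivalent if they have the same strong splits and corresponding quotient graphs are locally equivalent. $\Phi(G)$ is the number of graphs QASST equivalent to $G$. *)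

(* Defs.v *)
(* Graphs on a fixed labelled finite vertex set T are
   represented by their (ordered-pair) edge sets E : {set T * T}. *)
From mathcomp Require Import all_boot.
Set Implicit Arguments. Unset Strict Implicit. Unset Printing Implicit Defensive.

Section Graphs.
Variable V : finType.

Definition is_graph (E : {set V * V}) : bool :=
  [forall x, forall y, ((x, y) \in E) == ((y, x) \in E)] &&
  [forall x, (x, x) \notin E] &&
  [forall x, forall y, connect [rel a b | (a, b) \in E] x y].

Definition nbhd (E : {set V * V}) (v : V) : {set V} := [set w | (v, w) \in E].

Definition local_compl (v : V) (E : {set V * V}) : {set V * V} :=
  [set p | if [&& p.1 \in nbhd E v, p.2 \in nbhd E v & p.1 != p.2]
           then (p \notin E) else (p \in E)].

Definition lc_step : rel {set V * V} :=
  fun E F => [exists v, F == local_compl v E].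

Definition loc_equiv (E F : {set V * V}) : bool := connect lc_step E F.

End Graphs.

Section Splits.
Variable T : finType.

(* (A, ~:A) is a split: a bipartition (both sides nonempty) such that the
   A--B edges form a complete bipartite graph between the vertices having
   neighbours across. *)
Definition is_split (E : {set T * T}) (A : {set T}) : bool :=
  [&& A != set0, ~: A != set0 &
   [forall a, forall a', forall b, forall b',
      [&& a \in A, a' \in A, b \in ~: A, b' \in ~: A,
          (a, b) \in E & (a', b') \in E] ==> ((a, b') \in E)]].

Definition nontrivial_split (E : {set T * T}) (A : {set T}) : bool :=
  [&& is_split E A, 1 < #|A| & 1 < #|~: A|].

Definition crossing (A C : {set T}) : bool :=
  [&& A :&: C != set0, A :&: ~: C != set0,
      ~: A :&: C != set0 & ~: A :&: ~: C != set0].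

Definition strong_split (E : {set T * T}) (A : {set T}) : bool :=
  is_split E A &&
  [forall C, (is_split E C && (C != A) && (C != ~: A)) ==> ~~ crossing A C].

(* the sides of all nontrivial strong splits (closed under complement) *)
Definition strong_splits (E : {set T * T}) : {set {set T}} :=
  [set A | nontrivial_split E A && strong_split E A].

(* The nodes of the split-decomposition tree determined by a (laminar)
   family S of split sides: a node is identified with the partition of V
   into the branches at it (each branch is a single vertex attached to the
   node, or the far side of a tree edge = a side of a split in S). *)
Definition is_node (S : {set {set T}}) (P : {set {set T}}) : bool :=
  [&& partition P [set: T], 2 < #|P|,
      [forall X in P, (#|X| == 1) || (X \in S)] &
      [forall A in S, [exists X in P, (A \subset X) || (~: A \subset X)]]].

(* quotient graph at the node P: vertices are the blocks of P (the marker
   vertices / attached vertices), two blocks adjacent iff G has an edge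
   between them. *)
Definition quotient_graph (P : {set {set T}}) (E : {set T * T})
  : {set {set T} * {set T}} :=
  [set p | [&& p.1 \in P, p.2 \in P, p.1 != p.2 &
            [exists x in p.1, exists y in p.2, (x, y) \in E]]].

Definition qasst (E F : {set T * T}) : bool :=
  (strong_splits E == strong_splits F) &&
  [forall P, is_node (strong_splits E) P ==>
     loc_equiv (quotient_graph P E) (quotient_graph P F)].

Definition orbitO (E : {set T * T}) : {set {set T * T}} :=
  [set F | is_graph F && loc_equiv E F].

Definition Phi (E : {set T * T}) : nat :=
  #|[set F | is_graph F && qasst E F]|.

End Splits.

(* Main.v *)
Require Import Defs.
From mathcomp Require Import all_boot.
Set Implicit Arguments. Unset Strict Implicit. Unset Printing Implicit Defensive.

Lemma lcEg (V : finType) (v : V) (E : {set V * V}) x y : ((x, y) \in local_compl v E) =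
  (if [&& (v, x) \in E, (v, y) \in E & x != y] then (x, y) \notin E else (x, y) \in E).
Proof. by rewrite /local_compl /nbhd !inE. Qed.

Section Proofs.
Variable T : finType.
Implicit Types (E F : {set T * T}) (A X Y Z : {set T}) (v : T).

Definition sym E := forall x y, ((x, y) \in E) = ((y, x) \in E).
Definition irr E := forall x, (x, x) \notin E.

Lemma lcE v E x y : ((x, y) \in local_compl v E) =
  (if [&& (v, x) \in E, (v, y) \in E & x != y] then (x, y) \notin E else (x, y) \in E).
Proof. by rewrite /local_compl /nbhd !inE. Qed.

Lemma lc_sym v E : sym E -> sym (local_compl v E).
Proof.
move=> sE x y; rewrite !lcE (sE x y) [y == x]eq_sym.
by case: ((v,x) \in E); case: ((v,y) \in E).
Qed.

Lemma lc_irr v E : irr E -> irr (local_compl v E).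
Proof. by move=> iE x; rewrite lcE eqxx /= !andbF; apply: iE. Qed.

Lemma lcN v E w : irr E -> ((v, w) \in local_compl v E) = ((v, w) \in E).
Proof. by move=> iE; rewrite lcE (negbTE (iE v)). Qed.

Lemma lcK v E : irr E -> local_compl v (local_compl v E) = E.
Proof.
move=> iE; apply/setP => [[x y]]; rewrite !lcE (negbTE (iE v)) /=.
by case: [&& _, _ & _] => /=; rewrite ?negbK.
Qed.

Definition spl E A := forall a a' b b', a \in A -> a' \in A -> b \notin A -> b' \notin A ->
  (a, b) \in E -> (a', b') \in E -> (a, b') \in E.

Definition psplit E A := exists S R : {set T}, forall a b, a \in A -> b \notin A ->
  ((a, b) \in E) = (a \in S) && (b \in R).

Lemma spl_psplit E A : spl E A -> psplit E A.
Proof.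
move=> H.
exists [set a | [exists b, (b \notin A) && ((a,b) \in E)]].
exists [set b | [exists a, (a \in A) && ((a,b) \in E)]].
move=> a b Ha Hb; rewrite !inE; apply/idP/andP.
  by move=> Hab; split; apply/existsP; [exists b | exists a]; rewrite ?Ha ?Hb Hab.
case=> /existsP [b1 /andP [Hb1 Hab1]] /existsP [a1 /andP [Ha1 Ha1b]].
exact: (H a a1 b1 b).
Qed.

Lemma psplit_spl E A : psplit E A -> spl E A.
Proof.
case=> S [R H] a a' b b' Ha Ha' Hb Hb'.
rewrite !H // => /andP [-> _] /andP [_ ->] //.
Qed.

Lemma is_split_spl E A : is_split E A -> spl E A.
Proof.
case/and3P=> _ _ /forallP H a a' b b' Ha Ha' Hb Hb' H1 H2.
move: (H a) => /forallP/(_ a')/forallP/(_ b)/forallP/(_ b')/implyP; apply.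
by rewrite !inE Ha Ha' Hb Hb' H1 H2.
Qed.

Lemma is_split_eq E F A : (spl E A -> spl F A) -> is_split E A -> is_split F A.
Proof.
move=> HEF HE; have := HEF (is_split_spl HE).
case/and3P: HE => n1 n2 _ HF; rewrite /is_split n1 n2 /=.
apply/forallP=> a; apply/forallP=> a'; apply/forallP=> b; apply/forallP=> b'.
apply/implyP; rewrite !inE.
case/andP=> Ha /andP[Ha' /andP[Hb /andP[Hb' /andP[H1 H2]]]].
exact: (HF a a' b b').
Qed.

Lemma psplitC E A : sym E -> psplit E A -> psplit E (~: A).
Proof.
move=> sE [S [R H]]; exists R, S => a b; rewrite !inE negbK => Ha Hb.
by rewrite sE H // andbC.
Qed.

Lemma psplit_lc_in v E A : v \in A -> psplit E A -> psplit (local_compl v E) A.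
Proof.
move=> vA [S [R H]].
have neq a b : a \in A -> b \notin A -> a != b.
  by move=> Ha Hb; apply: contraNneq Hb => <-.
case: (boolP [exists b, (b \notin A) && ((v,b) \in E)]).
  case/existsP=> b0 /andP [Hb0 Hvb0].
  have vS : v \in S by move: Hvb0; rewrite H // => /andP [].
  exists [set a | (a \in S) != ((v,a) \in E)], R => a b Ha Hb.
  rewrite lcE inE (neq a b Ha Hb) (H a b Ha Hb) (H v b vA Hb) vS andbT /=.
  by case: (a \in S); case: ((v,a) \in E); case: (b \in R).
move/existsPn => Hn; exists S, R => a b Ha Hb.
have : ~~ ((b \notin A) && ((v,b) \in E)) := Hn b.
rewrite Hb /= => /negbTE vb.
by rewrite lcE vb /= andbF H.
Qed.

Lemma psplit_lc v E A : sym E -> psplit E A -> psplit (local_compl v E) A.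
Proof.
move=> sE HA; case: (boolP (v \in A)) => vA; first exact: psplit_lc_in.
rewrite -[A]setCK; apply: psplitC; first exact: lc_sym.
by apply: psplit_lc_in; [rewrite inE | apply: psplitC].
Qed.

Lemma is_split_lc v E A : sym E -> irr E -> is_split (local_compl v E) A = is_split E A.
Proof.
move=> sE iE; apply/idP/idP; apply: is_split_eq => /spl_psplit H; apply: psplit_spl.
  by rewrite -(lcK v iE); apply: psplit_lc => //; apply: lc_sym.
exact: psplit_lc.
Qed.

Lemma strong_splits_eq E F : (forall A, is_split E A = is_split F A) ->
  strong_splits E = strong_splits F.
Proof.
move=> H; apply/setP=> A; rewrite !inE /nontrivial_split /strong_split !H.
by do ! congr (_ && _); apply: eq_forallb => C; rewrite H.
Qed.


Definition adj E Y Z := [exists y in Y, exists z in Z, (y, z) \in E].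

Lemma qE P E Y Z : ((Y, Z) \in quotient_graph P E) = [&& Y \in P, Z \in P, Y != Z & adj E Y Z].
Proof. by rewrite inE. Qed.

Lemma adjC E Y Z : sym E -> adj E Y Z = adj E Z Y.
Proof.
move=> sE; apply/existsP/existsP.
  case=> y /andP [yY /existsP [z /andP [zZ yz]]]; exists z; rewrite zZ /=.
  by apply/existsP; exists y; rewrite yY -sE.
case=> z /andP [zZ /existsP [y /andP [yY yz]]]; exists y; rewrite yY /=.
by apply/existsP; exists z; rewrite zZ -sE.
Qed.

Lemma adj_eq E F Y Z : (forall y z, y \in Y -> z \in Z -> ((y,z) \in F) = ((y,z) \in E)) ->
  adj F Y Z = adj E Y Z.
Proof.
move=> H; apply: eq_existsb => y; case yY: (y \in Y) => //=.
apply: eq_existsb => z; case zZ: (z \in Z) => //=; exact: H.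
Qed.

Lemma quot_lc E P v : sym E -> irr E -> partition P [set: T] ->
  (forall X, X \in P -> spl E X) ->
  loc_equiv (quotient_graph P E) (quotient_graph P (local_compl v E)).
Proof.
move=> sE iE hP hS.
case/and3P: hP => /eqP cov triv _.
have vcov : v \in cover P by rewrite cov inE.
set X := pblock P v.
have XP : X \in P := pblock_mem vcov.
have vX : v \in X by rewrite mem_pblock.
have uniqB Y Z y : Y \in P -> Z \in P -> y \in Y -> y \in Z -> Y = Z.
  by move=> YP ZP yY yZ; rewrite -(def_pblock triv YP yY) (def_pblock triv ZP yZ).
set F := local_compl v E.
have sF : sym F by apply: lc_sym.
have tog Y Z y z : Y \in P -> Z \in P -> Y != Z -> y \in Y -> z \in Z ->
    ((y,z) \in F) = if ((v,y) \in E) && ((v,z) \in E) then (y,z) \notin E else (y,z) \in E.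
  move=> YP ZP YZ yY zZ; rewrite lcE.
  have -> : y != z by apply: contra_neq YZ => yz; apply: (uniqB _ _ y) => //; rewrite yz.
  by rewrite andbT.
have notboth Y Z : Y \in P -> Z \in P -> Y != Z ->
    (forall y z, y \in Y -> z \in Z -> ~~ (((v,y) \in E) && ((v,z) \in E))) ->
    adj F Y Z = adj E Y Z.
  move=> YP ZP YZ H; apply: adj_eq => y z yY zZ; rewrite (tog Y Z) //.
  by rewrite (negbTE (H y z yY zZ)).
have outX Y y : Y \in P -> X != Y -> y \in Y -> y \notin X.
  by move=> YP XY yY; apply/negP => yX; move/eqP: XY; apply; apply: (uniqB _ _ y).
case: (boolP [exists b, (b \notin X) && ((v,b) \in E)]); last first.
  move/existsPn => Hn.
  suff -> : quotient_graph P F = quotient_graph P E by apply: connect0.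
  apply/setP => [[Y Z]]; rewrite !qE.
  case: (boolP (Y \in P)) => YP //=; case: (boolP (Z \in P)) => ZP //=.
  case: (boolP (Y != Z)) => YZ //=.
  apply: notboth => // y z yY zZ; apply/negP => /andP [vy vz].
  have inX w : (v, w) \in E -> w \in X.
    by move=> vw; have := Hn w; rewrite vw andbT negbK.
  move/negP: YZ; apply.
  by rewrite -(uniqB _ _ y XP YP (inX _ vy) yY) (uniqB _ _ z XP ZP (inX _ vz) zZ).
case/existsP => b0 /andP [b0X vb0].
suff -> : quotient_graph P F = local_compl X (quotient_graph P E).
  by apply: connect1; apply/existsP; exists X.
have fi x w : x \in X -> w \notin X -> (x,w) \in E -> (v,w) \in E.
  by move=> xX wX xw; apply: (hS X XP v x b0 w).
have nb W : W \in P -> X != W -> adj E X W = [exists w in W, (v,w) \in E].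
  move=> WP XW; apply/existsP/existsP.
    case=> x /andP [xX /existsP [w /andP [wW xw]]]; exists w; rewrite wW /=.
    by apply: (fi x) => //; apply: (outX W).
  case=> w /andP [wW vw]; exists v; rewrite vX /=; apply/existsP; exists w; by rewrite wW.
have fii W w z : W \in P -> X != W -> [exists w in W, (v,w) \in E] -> w \in W -> z \notin W ->
    (w,z) \in E -> (v,w) \in E.
  move=> WP XW /existsP [w1 /andP [w1W vw1]] wW zW wz.
  have vW : v \notin W by apply/negP => vW; move/eqP: XW; apply; apply: (uniqB _ _ v).
  by rewrite sE; apply: (hS W WP w w1 z v) => //; rewrite -sE.
apply/setP => [[Y Z]]; rewrite lcEg !qE XP /=.
case: (boolP (Y \in P)) => YP //=.
case: (boolP (Z \in P)) => ZP //=.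
case: (boolP (Y != Z)) => YZ; last by rewrite /= andbF /= andbF.
have [XY|XY] := eqVneq X Y.
  rewrite -XY /= in YP YZ *.
  apply/existsP/existsP.
    case=> x /andP [xX /existsP [z /andP [zZ xz]]].
    rewrite (tog X Z) // in xz.
    case vz: ((v,z) \in E).
      by exists v; rewrite vX /=; apply/existsP; exists z; rewrite zZ.
    rewrite vz andbF in xz; exists x; rewrite xX /=; apply/existsP; exists z; by rewrite zZ.
  case=> x /andP [xX /existsP [z /andP [zZ xz]]].
  exists v; rewrite vX /=; apply/existsP; exists z; rewrite zZ /=.
  rewrite (tog X Z) // (negbTE (iE v)) /=.
  by apply: (fi x) => //; apply: (outX Z).
have [XZ|XZ] := eqVneq X Z.
  rewrite -XZ /= andbF /= in ZP YZ *.
  rewrite adjC // [adj E Y X]adjC //.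
  apply/existsP/existsP.
    case=> x /andP [xX /existsP [y /andP [yY xy]]].
    rewrite (tog X Y) // 1?eq_sym // in xy.
    case vy: ((v,y) \in E).
      by exists v; rewrite vX /=; apply/existsP; exists y; rewrite yY.
    rewrite vy andbF in xy; exists x; rewrite xX /=; apply/existsP; exists y; by rewrite yY.
  case=> x /andP [xX /existsP [y /andP [yY xy]]].
  exists v; rewrite vX /=; apply/existsP; exists y; rewrite yY /=.
  rewrite (tog X Y) // 1?eq_sym // (negbTE (iE v)) /=.
  by apply: (fi x) => //; apply: (outX Y).
rewrite !nb // andbT.
case: (boolP [exists w in Y, (v,w) \in E]) => nY; last first.
  apply: notboth => // y z yY zZ; apply/negP => /andP [vy _].
  by move/negP: nY; apply; apply/existsP; exists y; rewrite yY.
case: (boolP [exists w in Z, (v,w) \in E]) => nZ; last first.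
  apply: notboth => // y z yY zZ; apply/negP => /andP [_ vz].
  by move/negP: nZ; apply; apply/existsP; exists z; rewrite zZ.
have nYZ : forall y, y \in Y -> y \notin Z.
  by move=> y yY; apply/negP => yZ; move/eqP: YZ; apply; apply: (uniqB _ _ y).
have nZY : forall z, z \in Z -> z \notin Y.
  by move=> z zZ; apply/negP => zY; move/eqP: YZ; apply; apply: (uniqB _ _ z).
have vY : v \notin Y by apply/negP => vY; move/eqP: XY; apply; apply: (uniqB _ _ v).
have vZ : v \notin Z by apply/negP => vZ; move/eqP: XZ; apply; apply: (uniqB _ _ v).
rewrite /=; apply/idP/idP.
  case/existsP => y /andP [yY /existsP [z /andP [zZ yz]]].
  apply/negP => /existsP [y0 /andP [y0Y /existsP [z0 /andP [z0Z y0z0]]]].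
  rewrite (tog Y Z) // in yz.
  move: yz; case vy: ((v,y) \in E); case vz: ((v,z) \in E) => /= yz.
  - move/negP: yz; apply.
    have yz0 : (y, z0) \in E.
      by apply: (hS Y YP y y0 v z0 yY y0Y vY (nZY z0 z0Z) _ y0z0); rewrite sE.
    rewrite sE; apply: (hS Z ZP z z0 v y zZ z0Z vZ (nYZ y yY)); by rewrite sE.
  - move: vz; rewrite sE in yz.
    by rewrite (fii Z z y) // nYZ.
  - move: vy; by rewrite (fii Y y z) // nZY.
  - move: vy; by rewrite (fii Y y z) // nZY.
case/existsP: nY => y1 /andP [y1Y vy1]; case/existsP: nZ => z1 /andP [z1Z vz1].
move=> nadj; apply/existsP; exists y1; rewrite y1Y /=; apply/existsP; exists z1; rewrite z1Z /=.
rewrite (tog Y Z) // vy1 vz1 /=.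
by apply: contra nadj => yz; apply/existsP; exists y1; rewrite y1Y /=; apply/existsP; exists z1; rewrite z1Z.
all: by rewrite andbF.
Qed.


Lemma qasst_lc E v : sym E -> irr E -> qasst E (local_compl v E).
Proof.
move=> sE iE.
have ss : strong_splits E = strong_splits (local_compl v E).
  by apply: strong_splits_eq => A; rewrite is_split_lc.
rewrite /qasst -ss eqxx /=.
apply/forallP => P; apply/implyP => /and4P [hP _ hB _].
apply: quot_lc => // X XP.
move/forall_inP: hB => hB; case/orP: (hB X XP) => [/cards1P [x ->] | XS].
  by move=> a a' b b'; rewrite !inE => /eqP -> /eqP -> _ _.
move: XS; rewrite inE => /andP [/and3P [HX _ _] _]; exact: is_split_spl.
Qed.

Lemma qasst_refl E : qasst E E.
Proof. by rewrite /qasst eqxx /=; apply/forallP => P; apply/implyP => _; apply: connect0. Qed.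

Lemma qasst_trans E F H : qasst E F -> qasst F H -> qasst E H.
Proof.
move=> /andP [/eqP s1 /forallP q1] /andP [/eqP s2 /forallP q2].
apply/andP; split; first by apply/eqP; rewrite s1 s2.
apply/forallP => P; apply/implyP => nP.
have n2 : is_node (strong_splits F) P by rewrite -s1.
exact: (connect_trans (implyP (q1 P) nP) (implyP (q2 P) n2)).
Qed.

Lemma path_lc (p : seq {set T * T}) E : sym E -> irr E -> path (@lc_step T) E p ->
  qasst E (last E p) /\ loc_equiv (last E p) E.
Proof.
elim: p E => [|F p IH] E sE iE /=; first by split; [apply: qasst_refl | apply: connect0].
case/andP => /existsP [v /eqP eF] hp.
have sF : sym F by rewrite eF; apply: lc_sym.
have iF : irr F by rewrite eF; apply: lc_irr.
have [h1 h2] := IH F sF iF hp.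
split; first by apply: qasst_trans h1; rewrite eF; apply: qasst_lc.
apply: (connect_trans h2); apply: connect1; apply/existsP; exists v.
by rewrite eF lcK.
Qed.

Lemma loc_qasst E F : sym E -> irr E -> loc_equiv E F -> qasst E F /\ loc_equiv F E.
Proof. by move=> sE iE /connectP [p hp ->]; apply: path_lc. Qed.

Lemma graph_si E : is_graph E -> sym E /\ irr E.
Proof.
case/andP => /andP [/forallP s /forallP i] _; split.
  by move=> x y; apply/eqP; move/forallP: (s x); apply.
exact: i.
Qed.

End Proofs.

Theorem corollary3 (T : finType) (k : nat) (G : 'I_k.+1 -> {set T * T}) :
  (forall i, is_graph (G i)) ->
  (forall i j, qasst (G i) (G j)) ->
  (forall i j, i != j -> ~~ loc_equiv (G i) (G j)) ->
  (forall H, is_graph H -> qasst (G ord0) H ->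
     exists i, loc_equiv H (G i)) ->
  \sum_(i < k.+1) #|orbitO (G i)| = Phi (G ord0).
Proof.
move=> Hg Hq Hn Hc.
have HU : [set F | is_graph F && qasst (G ord0) F] = \bigcup_i orbitO (G i).
  apply/setP => F; rewrite inE; apply/andP/bigcupP.
    case=> gF qF; have [i Fi] := Hc F gF qF; exists i => //.
    have [sF iF] := graph_si gF.
    by rewrite inE gF /=; case: (loc_qasst sF iF Fi).
  case=> i _; rewrite inE => /andP [gF Fi]; split => //.
  have [sG iG] := graph_si (Hg i).
  by apply: qasst_trans (Hq ord0 i) _; case: (loc_qasst sG iG Fi).
rewrite /Phi HU -sum1_card partition_disjoint_bigcup.
  by apply: eq_bigr => i _; rewrite sum1_card.
move=> i j ij; rewrite disjoints_subset; apply/subsetP => F; rewrite !inE.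
case/andP => gF Fi; apply/negP => /andP [_ Fj].
have [sG iG] := graph_si (Hg j).
have [_ Fj'] := loc_qasst sG iG Fj.
by move/negP: (Hn i j ij); apply; apply: connect_trans Fi Fj'.
Qed.
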